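(* Let $T$ be a tree with $n$ vertices. Then $\mathrm{Min4PC}_T$ is isometrically $\ell_1$-embeddable in $\mathbb{R}^{n-1}$; that is, there is a map $\phi:\mathcal{V}_2\to\mathbb{R}^{n-1}$ such that for all $\{i,j\},\{s,t\}\in\mathcal{V}_2$, $\mathrm{Min4PC}_T(\{i,j\},\{s,t\})=\lVert\phi(\{i,j\})-\phi(\{s,t\})\rVert_1$.
   Context: For a tree $T$ with vertex set $V$, $d_{i,j}$ denotes the distance between vertices $i,j$, and $\mathcal{V}_2$ is the set of 2-element subsets of $V$. The matrix $\mathrm{Min4PC}_T$ is the $\binom n2\times\binom n2$ matrix with rows and columns indexed by $\mathcal{V}_2$ whose entry in row $\{i,j\}$ and column $\{k,l\}$ is $\min\{d_{i,l}+d_{j,k},\ d_{i,k}+d_{j,l},\ d_{i,j}+d_{k,l}\}$. *)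

(* Defs.v *)
From HB Require Import structures.
From mathcomp Require Import all_boot all_order all_algebra.
From mathcomp Require Import reals.
Set Implicit Arguments. Unset Strict Implicit. Unset Printing Implicit Defensive.
Import Order.TTheory GRing.Theory Num.Theory.

Definition simple_graph (T : finType) (e : rel T) : Prop :=
  symmetric e /\ irreflexive e.

Definition graph_connected (T : finType) (e : rel T) : Prop :=
  forall x y : T, exists p : seq T, path e x p /\ last x p = y.

Definition graph_acyclic (T : finType) (e : rel T) : Prop :=
  forall (x : T) (p : seq T),
    uniq (x :: p) -> 2 <= size p -> path e x p -> ~~ e (last x p) x.

Definition is_tree (T : finType) (e : rel T) : Prop :=
  [/\ simple_graph e, graph_connected e & graph_acyclic e].

Fixpoint walk (T : finType) (e : rel T) (k : nat) (x y : T) : bool :=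
  if k is k'.+1 then [exists z, e x z && walk e k' z y] else x == y.

(* Graph distance: least k (< #|T|) such that a walk of length k from x to y
   exists (for a connected graph such a k always exists). *)
Definition dist (T : finType) (e : rel T) (x y : T) : nat :=
  find (fun k => walk e k x y) (iota 0 #|T|).

(* Entry of Min4PC in row {i,j}, column {k,l}. *)
Definition min4pc (T : finType) (e : rel T) (i j k l : T) : nat :=
  minn (dist e i l + dist e j k)
       (minn (dist e i k + dist e j l) (dist e i j + dist e k l)).

Definition l1norm (R : numDomainType) (m : nat) (v : 'rV[R]_m) : R :=
  \sum_(c < m) `|v 0 c|.

(* Main.v *)
Require Import Defs.
From HB Require Import structures.
From mathcomp Require Import all_boot all_order all_algebra.
From mathcomp Require Import reals.
From mathcomp Require Import zify.
Import Order.TTheory GRing.Theory Num.Theory.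

Set Implicit Arguments. Unset Strict Implicit. Unset Printing Implicit Defensive.

Section Walks.
Variables (T : finType) (e : rel T).
Hypothesis esym : symmetric e.

Lemma walk_addr k x y z : walk e k x y -> e y z -> walk e k.+1 x z.
Proof.
elim: k x => [|k IH] x /=.
  by move=> /eqP -> eyz; apply/existsP; exists z; rewrite eyz eqxx.
by case/existsP=> w /andP[exw wk] eyz; apply/existsP; exists w; rewrite exw; apply: IH.
Qed.

Lemma walk_sym k x y : walk e k x y -> walk e k y x.
Proof.
elim: k x => [|k IH] x /=; first by rewrite eq_sym.
by case/existsP=> w /andP[exw wk]; apply: walk_addr (IH _ wk) _; rewrite esym.
Qed.

Lemma walk_cons k x y z : e x z -> walk e k z y -> walk e k.+1 x y.
Proof. by move=> exz wk; apply/existsP; exists z; rewrite exz. Qed.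

Lemma path_walk x p : path e x p -> walk e (size p) x (last x p).
Proof.
elim: p x => [|z p IH] x /=; first by [].
by case/andP=> exz pp; apply: walk_cons exz (IH _ pp).
Qed.

Lemma dist_min k x y : walk e k x y -> dist e x y <= k.
Proof.
move=> wk; rewrite /dist.
case: (ltnP k #|T|) => [kn|nk].
  rewrite leqNgt; apply/negP => H; have := before_find 0 H.
  by rewrite nth_iota // add0n wk.
by apply: leq_trans (find_size _ _) _; rewrite size_iota.
Qed.

Lemma dist_walk k x y : walk e k x y -> k < #|T| -> walk e (dist e x y) x y.
Proof.
move=> wk kn; rewrite /dist.
have hs : has (fun k => walk e k x y) (iota 0 #|T|).
  by apply/hasP; exists k; rewrite ?mem_iota.
have := nth_find 0 hs; rewrite nth_iota ?add0n //.
by have := hs; rewrite has_find size_iota.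
Qed.

Lemma dist_lt k x y : walk e k x y -> k < #|T| -> dist e x y < #|T|.
Proof.
move=> wk kn; rewrite /dist.
have hs : has (fun k => walk e k x y) (iota 0 #|T|).
  by apply/hasP; exists k; rewrite ?mem_iota.
by have := hs; rewrite has_find size_iota.
Qed.

Hypothesis conn : graph_connected e.

Lemma short_walk x y : exists2 k, k < #|T| & walk e k x y.
Proof.
have [p [pp lp]] := conn x y.
case: (shortenP pp) lp => p' pp' up' _ lp.
exists (size p'); last by rewrite -lp; apply: path_walk.
have := max_card (mem (x :: p')); rewrite (card_uniqP up') /=.
done.
Qed.

Lemma dist_walk' x y : walk e (dist e x y) x y /\ dist e x y < #|T|.
Proof.
have [k kn wk] := short_walk x y.
by split; [apply: dist_walk wk kn | apply: dist_lt wk kn].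
Qed.
End Walks.


Definition lamb (a b c d a' b' c' d' : bool) :=
  [&& a ==> a', b ==> b', c ==> c' & d ==> d'] ||
  [&& a' ==> a, b' ==> b, c' ==> c & d' ==> d] ||
  [&& ~~ (a && a'), ~~ (b && b'), ~~ (c && c') & ~~ (d && d')].

Lemma key_bool (a1 b1 c1 d1 a2 b2 c2 d2 a3 b3 c3 d3 : bool) :
  ~~ [&& lamb a1 b1 c1 d1 a2 b2 c2 d2, lamb a2 b2 c2 d2 a3 b3 c3 d3,
        lamb a1 b1 c1 d1 a3 b3 c3 d3,
        (a1 != d1) && (b1 != c1), (a2 != c2) && (b2 != d2) &
        (a3 != b3) && (c3 != d3)].
Proof.
by case: a1; case: b1; case: c1; case: d1; case: a2; case: b2; case: c2; case: d2;
   case: a3; case: b3; case: c3; case: d3.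
Qed.

Section Rooted.
Variables (T : finType) (e : rel T).
Hypothesis esym : symmetric e.
Hypothesis eirr : irreflexive e.
Hypothesis conn : graph_connected e.
Hypothesis acyc : graph_acyclic e.
Variable r : T.

Definition h v := dist e v r.

Lemma h_walk v : walk e (h v) v r.
Proof. exact: (dist_walk' conn v r).1. Qed.

Lemma h_lt v : h v < #|T|.
Proof. exact: (dist_walk' conn v r).2. Qed.

Lemma h0 v : h v = 0 -> v = r.
Proof. by move=> h0; have := h_walk v; rewrite h0 /= => /eqP. Qed.

Lemma hr : h r = 0.
Proof. by apply/eqP; rewrite -leqn0; apply: dist_min; rewrite /= eqxx. Qed.

Definition par v := if [pick z | e v z && walk e (h v).-1 z r] is Some z then z else v.

Lemma par_r : par r = r.
Proof.
rewrite /par; case: pickP => // z /andP[erz]; rewrite hr /= => /eqP zr.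
by move: erz; rewrite zr eirr.
Qed.

Lemma par_spec v : v != r -> e v (par v) /\ walk e (h v).-1 (par v) r.
Proof.
move=> vr; rewrite /par; case: pickP => [z /andP[]//|none].
have := h_walk v; case hv: (h v) => [|k].
  by move: vr; rewrite (h0 hv) eqxx.
case/existsP => z /andP[evz wz]; have := none z; rewrite evz hv /=.
by move=> H; move: wz; rewrite -/(walk e k z r) H.
Qed.

Lemma h_par v : h (par v) = (h v).-1.
Proof.
have [->|vr] := eqVneq v r; first by rewrite par_r hr.
have [evp wp] := par_spec vr.
have le1 := dist_min wp.
have le2 : h v <= (h (par v)).+1 by apply: dist_min; apply: walk_cons evp (h_walk _).
rewrite /h in le1 le2 *; lia.
Qed.

Lemma h_iter k x : h (iter k par x) = h x - k.
Proof. by elim: k => [|k IH]; rewrite ?subn0 //= h_par IH; lia. Qed.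

Lemma iter_r k x : h x <= k -> iter k par x = r.
Proof. by move=> hk; apply: h0; rewrite h_iter; lia. Qed.

Lemma iter_par k x : iter k.+1 par x = iter k par (par x).
Proof. by rewrite iterSr. Qed.



Definition anc v x := [exists k : 'I_#|T|, iter k par x == v].

Lemma ancP v x : reflect (exists k, iter k par x = v) (anc v x).
Proof.
apply: (iffP existsP) => [[k /eqP <-]|[k <-]]; first by exists k.
have hx := h_lt x.
case: (ltnP k #|T|) => kn; first by exists (Ordinal kn).
have n0' : 0 < #|T| by apply/card_gt0P; exists r.
have n0 : #|T|.-1 < #|T| by rewrite ltn_predL.
exists (Ordinal n0) => /=.
have hx' : h x <= #|T|.-1 by rewrite -ltnS prednK.
rewrite !iter_r //; lia.
Qed.

Lemma anc_refl x : anc x x.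
Proof. by apply/ancP; exists 0. Qed.

Lemma anc_r x : anc r x.
Proof. by apply/ancP; exists (h x); rewrite iter_r. Qed.

Lemma anc_trans u v x : anc u v -> anc v x -> anc u x.
Proof.
move=> /ancP[k <-] /ancP[m <-]; apply/ancP; exists (k + m).
by rewrite iterD.
Qed.

Lemma anc_total v w x : anc v x -> anc w x -> anc v w || anc w v.
Proof.
move=> /ancP[k <-] /ancP[m <-]; case: (leqP k m) => km.
  by apply/orP; right; apply/ancP; exists (m - k); rewrite -iterD subnK.
by apply/orP; left; apply/ancP; exists (k - m); rewrite -iterD subnK // ltnW.
Qed.

Lemma anc_h v x : anc v x -> h v <= h x /\ iter (h x - h v) par x = v.
Proof.
move=> /ancP[k <-]; rewrite h_iter //; split; first lia.
case: (leqP k (h x)) => kx; first by congr iter; lia.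
rewrite (iter_r (k:=k)) ?(iter_r (k := h x - _)) //; lia.
Qed.

Lemma anc_antisym x y : anc x y -> anc y x -> x = y.
Proof.
move=> /anc_h[l1 e1] /anc_h[l2 e2].
by rewrite -e1; have -> : h y - h x = 0 by lia.
Qed.

Lemma anc_to_r v : anc v r -> v = r.
Proof. by move=> /anc_h[l1 <-]; rewrite iter_r // hr. Qed.

Lemma h_gt0 x : x != r -> 0 < h x.
Proof. by move=> xr; rewrite lt0n; apply/eqP => /h0 xr'; rewrite xr' eqxx in xr. Qed.

Lemma anc_par_self x : x != r -> ~~ anc x (par x).
Proof.
move=> xr; apply/negP => /anc_h[]; rewrite h_par.
have := h_gt0 xr; lia.
Qed.

Lemma anc_par u x : u != x -> anc u (par x) = anc u x.
Proof.
move=> ux; apply/idP/idP => /ancP[k Hk]; apply/ancP.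
  by exists k.+1; rewrite iter_par.
case: k Hk => [|k] Hk; first by move: ux; rewrite -Hk eqxx.
by exists k; rewrite -iter_par.
Qed.


Lemma path_map_iota (f : nat -> T) m K :
  (forall k, m <= k -> k < m + K -> e (f k) (f k.+1)) ->
  path e (f m) (map f (iota m.+1 K)).
Proof.
elim: K m => [|K IH] m H //=.
rewrite H ?addnS ?ltnS ?leq_addr //=; apply: IH => k mk kK.
by apply: H; lia.
Qed.

Lemma last_map_iota (f : nat -> T) m K :
  last (f m) (map f (iota m.+1 K)) = f (m + K).
Proof.
elim: K m => [|K IH] m /=; first by rewrite addn0.
by rewrite IH addnS addSn.
Qed.

Lemma edge_par a b : e a b -> a = par b \/ b = par a.
Proof.
wlog hab : a b / h a <= h b.
  move=> W eab; case: (leqP (h a) (h b)) => H; first exact: W.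
  have eba : e b a by rewrite esym.
  by case: (W b a (ltnW H) eba) => ?; [right|left].
move=> eab.
have eba : e b a by rewrite esym.
have hba : h b <= (h a).+1 by apply: dist_min; apply: walk_cons eba (h_walk a).
have ab : a != b by apply: contraTneq eab => ->; rewrite eirr.
have br : b != r.
  apply/negP => /eqP bE; have hb0 : h b = 0 by rewrite bE hr.
  have ha0 : h a = 0 by lia.
  by move: ab; rewrite (h0 ha0) bE eqxx.
case: (boolP (a == par b)) => [/eqP|apb]; first by left.
case: (boolP (b == par a)) => [/eqP|bpa]; first by right.
exfalso.
have exP : exists k, anc (iter k par a) b by exists (h a); rewrite iter_r // anc_r.
case: (ex_minnP exP) => k0 Pk0 mink0.
have k0a : k0 <= h a by apply: mink0; rewrite iter_r // anc_r.
have [hcb cE] := anc_h Pk0.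
have hc := h_iter k0 a.
have k0pos : 0 < k0.
  case: k0 {mink0 Pk0 k0a} hcb cE hc => [|k0] // hcb cE hc.
  move: cE; rewrite /= in hc *; rewrite hc.
  have : h b - h a = 0 \/ h b - h a = 1 by lia.
  by rewrite subn0; case=> -> /= E; [move: ab; rewrite E eqxx | move: apb; rewrite E eqxx].
set c := iter k0 par a in hcb cE hc.
set m0 := h b - h c in cE.
have m0pos : 0 < m0 by rewrite /m0; lia.
have m0b : m0 <= h b by rewrite /m0; lia.
pose K := k0 + m0.
pose f k := if k <= k0 then iter k par a else iter (K - k) par b.
have fA k : k <= k0 -> f k = iter k par a by move=> kk; rewrite /f kk.
have fB k : k0 <= k -> k <= K -> f k = iter (K - k) par b.
  move=> k0k kK; rewrite /f; case: ifP => kk; last by [].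
  have -> : k = k0 by lia.
  by rewrite -/c -cE /K; congr iter; lia.
have hfA k : k <= k0 -> h (f k) = h a - k by move=> kk; rewrite fA // h_iter.
have hfB k : k0 <= k -> k <= K -> h (f k) = h b - (K - k).
  by move=> k0k kK; rewrite fB // h_iter.
have Hpath : path e (f 0) (map f (iota 1 K)).
  apply: path_map_iota => k _; rewrite add0n => kK.
  case: (ltnP k k0) => kk.
    rewrite fA ?(ltnW kk) // fA // iterS.
    have : iter k par a != r.
      by apply/negP => /eqP E; have := h_iter k a; rewrite E hr; lia.
    by case/par_spec.
  rewrite fB ?(ltnW kK) // fB // ?(leq_trans kk) //.
  have -> : K - k = (K - k.+1).+1 by lia.
  rewrite iterS.
  have : iter (K - k.+1) par b != r.
    by apply/negP => /eqP E; have := h_iter (K - k.+1) b; rewrite E hr /K; lia.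
  by case/par_spec => E _; rewrite esym.
have Hlast : last (f 0) (map f (iota 1 K)) = b.
  by rewrite (last_map_iota f 0) add0n fB ?subnn // /K; lia.
have Hf0 : f 0 = a by rewrite fA.
have inj1 k l : k <= l -> l <= K -> f k = f l -> k = l.
  move=> kl lK fkl.
  case: (leqP l k0) => lk0.
    by have := hfA k (leq_trans kl lk0); rewrite fkl hfA //; lia.
  case: (leqP k0 k) => k0k.
    by have := hfB k k0k (leq_trans kl lK); rewrite fkl hfB ?(ltnW lk0) //; lia.
  have : anc (iter k par a) b.
    by apply/ancP; exists (K - l); rewrite -fA ?(ltnW k0k) // fkl fB // ltnW.
  by move/mink0; lia.
have Huniq : uniq (f 0 :: map f (iota 1 K)).
  rewrite -[f 0 :: _]/(map f (iota 0 K.+1)) map_inj_in_uniq ?iota_uniq //.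
  move=> k l; rewrite !mem_iota !add0n !ltnS => /andP[_ kK] /andP[_ lK] fkl.
  by case: (leqP k l) => kl; [apply: inj1 | symmetry; apply: inj1 => //; apply: ltnW].
have := acyc Huniq _ Hpath; rewrite size_map size_iota Hlast Hf0 eba.
by move=> /(_ _)/negP; apply; rewrite /K; lia.
Qed.


Definition D x y := \sum_(v | v != r) (anc v x != anc v y : nat).

Lemma D_tri x y z : D x y <= D x z + D z y.
Proof.
rewrite /D -big_split /=; apply: leq_sum => v _.
by case: (anc v x); case: (anc v y); case: (anc v z).
Qed.

Lemma D_sym x y : D x y = D y x.
Proof. by apply: eq_bigr => v _; rewrite eq_sym. Qed.

Lemma D_xx x : D x x = 0.
Proof. by apply: big1 => v _; rewrite eqxx. Qed.

Lemma D_par x : D x (par x) <= 1.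
Proof.
have [->|xr] := eqVneq x r; first by rewrite par_r D_xx.
rewrite /D (bigD1 x) //= big1 ?addn0 ?leq_b1 //.
by move=> v /andP[_ vx]; rewrite anc_par // eqxx.
Qed.

Lemma D_edge a b : e a b -> D a b <= 1.
Proof. by case/edge_par => ->; rewrite ?D_par // D_sym D_par. Qed.

Lemma D_walk k x y : walk e k x y -> D x y <= k.
Proof.
elim: k x => [|k IH] x /=; first by move/eqP->; rewrite D_xx.
case/existsP => z /andP[exz wz].
apply: leq_trans (D_tri x y z) _.
by rewrite -add1n leq_add // ?D_edge // IH.
Qed.

Lemma D_step x y : x != r -> ~~ anc x y -> D x y = (D (par x) y).+1.
Proof.
move=> xr nxy; rewrite /D (bigD1 x) //= (bigD1 x xr) /=.
rewrite anc_refl (negbTE nxy) (negbTE (anc_par_self xr)) /= add0n add1n.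
congr S; apply: eq_bigr => v /andP[_ vx]; rewrite anc_par //.
Qed.

Lemma D_walk_ex m x y : D x y = m -> walk e m x y.
Proof.
elim: m x y => [|m IH] x y Dxy.
  case: (boolP (anc x y)) => [axy|nxy].
    case: (boolP (anc y x)) => [ayx|nyx]; first by rewrite /= (anc_antisym axy ayx).
    have yr : y != r by apply: contraNneq nyx => ->; apply: anc_r.
    by move: Dxy; rewrite D_sym D_step.
  have xr : x != r by apply: contraNneq nxy => ->; apply: anc_r.
  by move: Dxy; rewrite D_step.
case: (boolP (anc x y)) => [axy|nxy].
  case: (boolP (anc y x)) => [ayx|nyx].
    by move: Dxy; rewrite (anc_antisym axy ayx) D_xx.
  have yr : y != r by apply: contraNneq nyx => ->; apply: anc_r.
  move: Dxy; rewrite D_sym D_step // => -[] /IH /(walk_sym esym) W.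
  by apply: walk_addr W _; rewrite esym; case: (par_spec yr).
have xr : x != r by apply: contraNneq nxy => ->; apply: anc_r.
move: Dxy; rewrite D_step // => -[] /IH W.
by apply: walk_cons W; case: (par_spec xr).
Qed.

Lemma dist_D x y : dist e x y = D x y.
Proof.
apply/eqP; rewrite eqn_leq; apply/andP; split.
  by apply: dist_min; apply: D_walk_ex.
by apply: D_walk; case: (dist_walk' conn x y).
Qed.


Lemma lam_anc v w i j s t :
  lamb (anc v i) (anc v j) (anc v s) (anc v t) (anc w i) (anc w j) (anc w s) (anc w t).
Proof.
rewrite /lamb; case: (boolP [exists x, anc v x && anc w x]) => [/existsP[x /andP[vx wx]]|/existsPn N].
  case/orP: (anc_total vx wx) => [vw|wv].
    by apply/orP; left; apply/orP; right; apply/and4P; split; apply/implyP => /(anc_trans vw).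
  by apply/orP; left; apply/orP; left; apply/and4P; split; apply/implyP => /(anc_trans wv).
by apply/orP; right; apply/and4P; split; apply: N.
Qed.

Definition Qp i j s t v := ((anc v i != anc v j) != (anc v s != anc v t) : nat).

Lemma pair_ge a b c d i j s t :
  (forall v, ((anc v a != anc v b) + (anc v c != anc v d) >= Qp i j s t v)) ->
  (\sum_(v | v != r) Qp i j s t v <= D a b + D c d).
Proof. by move=> H; rewrite /D -big_split; apply: leq_sum => v _. Qed.

Lemma pair_eq a b c d i j s t :
  (forall v, v != r -> ((anc v a != anc v b) + (anc v c != anc v d) = Qp i j s t v)) ->
  (D a b + D c d = \sum_(v | v != r) Qp i j s t v).
Proof. by move=> H; rewrite /D -big_split; apply: eq_bigr => v vr; rewrite /= H. Qed.
Lemma min4pc_Q i j s t :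
  min4pc e i j s t = \sum_(v | v != r) Qp i j s t v.
Proof.
rewrite /min4pc !dist_D.
have g1 : \sum_(v | v != r) Qp i j s t v <= D i t + D j s.
  by apply: pair_ge => v; rewrite /Qp;
     case: (anc v i); case: (anc v j); case: (anc v s); case: (anc v t).
have g2 : \sum_(v | v != r) Qp i j s t v <= D i s + D j t.
  by apply: pair_ge => v; rewrite /Qp;
     case: (anc v i); case: (anc v j); case: (anc v s); case: (anc v t).
have g3 : \sum_(v | v != r) Qp i j s t v <= D i j + D s t.
  by apply: pair_ge => v; rewrite /Qp;
     case: (anc v i); case: (anc v j); case: (anc v s); case: (anc v t).
case: (boolP [exists v, (v != r) && ((anc v i != anc v t) && (anc v j != anc v s))])
   => [/existsP[v1 /andP[_ B1]]|/existsPn N1]; last first.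
  have E : D i t + D j s = \sum_(v | v != r) Qp i j s t v.
    apply: pair_eq => v vr; have := N1 v; rewrite vr /= /Qp.
    by case: (anc v i); case: (anc v j); case: (anc v s); case: (anc v t).
  rewrite E; lia.
case: (boolP [exists v, (v != r) && ((anc v i != anc v s) && (anc v j != anc v t))])
   => [/existsP[v2 /andP[_ B2]]|/existsPn N2]; last first.
  have E : D i s + D j t = \sum_(v | v != r) Qp i j s t v.
    apply: pair_eq => v vr; have := N2 v; rewrite vr /= /Qp.
    by case: (anc v i); case: (anc v j); case: (anc v s); case: (anc v t).
  rewrite E; lia.
case: (boolP [exists v, (v != r) && ((anc v i != anc v j) && (anc v s != anc v t))])
   => [/existsP[v3 /andP[_ B3]]|/existsPn N3]; last first.
  have E : D i j + D s t = \sum_(v | v != r) Qp i j s t v.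
    apply: pair_eq => v vr; have := N3 v; rewrite vr /= /Qp.
    by case: (anc v i); case: (anc v j); case: (anc v s); case: (anc v t).
  rewrite E; lia.
exfalso.
have := key_bool (anc v1 i) (anc v1 j) (anc v1 s) (anc v1 t)
                 (anc v2 i) (anc v2 j) (anc v2 s) (anc v2 t)
                 (anc v3 i) (anc v3 j) (anc v3 s) (anc v3 t).
by rewrite !lam_anc B1 B2 B3.
Qed.

End Rooted.


Local Open Scope ring_scope.

Lemma sum_cast (T : finType) (A : {pred T}) m (E : m = #|A|) (F : T -> nat) :
  (\sum_(c < m) F (enum_val (cast_ord E c)) = \sum_(c < #|A|) F (enum_val c))%N.
Proof. by subst m; apply: eq_bigr => c _; rewrite cast_ord_id. Qed.

Unset Implicit Arguments.

Theorem theorem1p4 (R : realType) (T : finType) (e : rel T) :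
  is_tree e ->
  exists phi : {set T} -> 'rV[R]_(#|T|.-1),
    forall i j s t : T, i != j -> s != t ->
      (min4pc e i j s t)%:R = l1norm (phi [set i; j] - phi [set s; t]).
Proof.
rewrite /is_tree /simple_graph => -[[esym eirr] conn acyc].
case: (pickP (fun x : T => true)) => [r _|none]; last first.
  by exists (fun _ => 0) => i; have := none i.
have E : #|T|.-1 = #|predC1 r| by rewrite cardC1.
pose G (S : {set T}) v := [exists x in S, exists y in S, anc e r v x != anc e r v y].
have G2 i j v : G [set i; j] v = (anc e r v i != anc e r v j).
  rewrite /G; apply/idP/idP.
    by case/existsP => x /andP[]; rewrite !inE => /orP[]/eqP-> /existsP[y /andP[]];
      rewrite !inE => /orP[]/eqP->; rewrite ?eqxx // eq_sym.
  move=> H; apply/existsP; exists i; rewrite !inE eqxx /=.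
  by apply/existsP; exists j; rewrite !inE eqxx orbT.
exists (fun S => \row_(c < #|T|.-1) ((G S (enum_val (cast_ord E c)) : nat)%:R : R)).
move=> i j s t ij st.
rewrite (min4pc_Q esym eirr conn acyc r) /l1norm.
have -> : (\sum_(v | v != r) Qp e r i j s t v =
          \sum_(c < #|T|.-1) Qp e r i j s t (enum_val (cast_ord E c)))%N.
  by rewrite sum_cast -big_enum_val.
rewrite natr_sum; apply: eq_bigr => c _; rewrite !mxE !G2 /Qp.
by case: (anc e r _ i); case: (anc e r _ j); case: (anc e r _ s); case: (anc e r _ t);
   rewrite /= ?subrr ?subr0 ?sub0r ?normrN ?normr1 ?normr0.
Qed.
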